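(* Let $m$ be a positive integer with $3\mid 2^m+1$, $n=2m$, let $s$ be an integer with $\gcd(s,2^m+1)=1$, and let $a=\overline{a}\xi^k\in\mathbb{F}_{2^n}^*$ with $\overline{a}\in\mathbb{F}_{2^m}$ and $0\le k\le 2^m$. Define $f:\mathbb{F}_{2^n}\to\mathbb{F}_2$ by $f(0)=0$ and $$f(x)=\sum_{i=1}^{\frac{2^m+1}{3}-1}{\rm Tr}_1^n\big(ax^{(3i+s)(2^m-1)}\big).$$ Then $f$ is bent if and only if $$K_m(\overline{a})=3-\sum_{j=0}^{2}(-1)^{{\rm Tr}_1^n(a\xi^{j\frac{2^m+1}{3}})}.$$ Furthermore, if $f$ is bent, then $K_m(\overline{a})=0$ when ${\rm Tr}_1^n(a)={\rm Tr}_1^n(a\xi^{\frac{2^m+1}{3}})={\rm Tr}_1^n(a\xi^{2\frac{2^m+1}{3}})=0$, and $K_m(\overline{a})=4$ otherwise.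
   Context: ${\rm Tr}_k^t$ is the trace map from $\mathbb{F}_{2^t}$ to $\mathbb{F}_{2^k}$. $\xi$ is a fixed generator of the cyclic group $U=\{x\in\mathbb{F}_{2^n}:x^{2^m+1}=1\}$. $K_m(\beta)=\sum_{x\in\mathbb{F}_{2^m}}(-1)^{{\rm Tr}_1^m(\beta x+x^{2^m-2})}$. A function $f:\mathbb{F}_{2^n}\to\mathbb{F}_2$ is bent if $|W_f(\lambda)|^2=2^n$ for all $\lambda$, where $W_f(\lambda)=\sum_{x}(-1)^{f(x)+{\rm Tr}_1^n(\lambda x)}$. *)

(* Defs.v *)
From mathcomp Require Import all_boot all_order all_algebra all_field.
Set Implicit Arguments. Unset Strict Implicit. Unset Printing Implicit Defensive.
Import GRing.Theory Num.Theory.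
Local Open Scope ring_scope.

(* Tr_1^k(x) = sum_{i<k} x^(2^i)  (absolute trace of F_{2^k} when x is in F_{2^k}) *)
Definition trace (F : finFieldType) (k : nat) (x : F) : F :=
  \sum_(i < k) x ^+ (2 ^ i).

(* (-1)^y for y in the prime field F_2 = {0,1} of F *)
Definition sgn (F : finFieldType) (y : F) : int := if y == 0 then 1 else -1.

Definition walsh (F : finFieldType) (n : nat) (f : F -> F) (lam : F) : int :=
  \sum_(x : F) sgn (f x + trace n (lam * x)).

Definition bent (F : finFieldType) (n : nat) (f : F -> F) : Prop :=
  forall lam : F, (walsh n f lam) ^+ 2 = (2 ^ n)%:Z.

(* Kloosterman sum K_m(beta) = sum_{x in F_{2^m}} (-1)^(Tr_1^m(beta x + x^(2^m-2))),
   F_{2^m} being the subfield {x | x^(2^m) = x} of F *)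
Definition kloosterman (F : finFieldType) (m : nat) (beta : F) : int :=
  \sum_(x : F | x ^+ (2 ^ m) == x) sgn (trace m (beta * x + x ^+ (2 ^ m - 2))).

(* Main.v *)
Require Import Defs.
From mathcomp Require Import all_boot all_order all_algebra all_field.
From mathcomp Require Import zify ring.
Set Implicit Arguments. Unset Strict Implicit. Unset Printing Implicit Defensive.
Import GRing.Theory Num.Theory.
Local Open Scope ring_scope.

Section Basics.
Variable F : finFieldType.
Hypothesis char2 : (2 \in [pchar F])%N.

Lemma sqrD (x y : F) : (x + y) ^+ 2 = x ^+ 2 + y ^+ 2.
Proof. by rewrite sqrrD mulrn_pchar // addr0. Qed.

Lemma frobD i (x y : F) : (x + y) ^+ (2 ^ i) = x ^+ (2 ^ i) + y ^+ (2 ^ i).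
Proof.
elim: i => [|i IH]; first by rewrite !expr1.
by rewrite expnSr !exprM IH sqrD.
Qed.

Lemma trD k (x y : F) : trace k (x + y) = trace k x + trace k y.
Proof. by rewrite /trace -big_split; apply: eq_bigr => i _; rewrite frobD. Qed.

Lemma tr0 k : trace k (0 : F) = 0.
Proof. by rewrite /trace big1 // => i _; rewrite expr0n expn_eq0. Qed.

Lemma tr_sum k I (r : seq I) (P : pred I) (G : I -> F) :
  trace k (\sum_(i <- r | P i) G i) = \sum_(i <- r | P i) trace k (G i).
Proof. exact: (big_morph (trace k) (trD k) (tr0 k)). Qed.

Lemma sq_sum I (r : seq I) (P : pred I) (G : I -> F) :
  (\sum_(i <- r | P i) G i) ^+ 2 = \sum_(i <- r | P i) (G i) ^+ 2.
Proof. exact: (big_morph (fun x : F => x ^+ 2) sqrD (expr0n _ _)). Qed.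

Lemma tr_sq k (x : F) : x ^+ (2 ^ k) = x -> (trace k x) ^+ 2 = trace k x.
Proof.
move=> hx; rewrite /trace sq_sum.
have h1 : \sum_(i < k.+1) x ^+ (2 ^ i) = x + \sum_(i < k) (x ^+ (2 ^ i)) ^+ 2.
  rewrite big_ord_recl expn0 expr1; congr (_ + _); apply: eq_bigr => i _.
  by rewrite -exprM -expnSr.
have h2 : \sum_(i < k.+1) x ^+ (2 ^ i) = \sum_(i < k) x ^+ (2 ^ i) + x.
  by rewrite big_ord_recr /= hx.
have E : \sum_(i < k) (x ^+ (2 ^ i)) ^+ 2 + x = \sum_(i < k) x ^+ (2 ^ i) + x.
  by rewrite -h2 h1 addrC.
by apply: (addIr x).
Qed.

Lemma bit01 (y : F) : y ^+ 2 = y -> y = 0 \/ y = 1.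
Proof.
move=> h; have : y * (y - 1) = 0 by rewrite mulrBr mulr1 -expr2 h subrr.
by move/eqP; rewrite mulf_eq0 subr_eq0 => /orP[/eqP|/eqP]; [left|right].
Qed.

Lemma one_neq0 : (1 : F) != 0. Proof. exact: oner_neq0. Qed.

Lemma sgnD (y z : F) : y ^+ 2 = y -> z ^+ 2 = z -> sgn (y + z) = sgn y * sgn z.
Proof.
move=> /bit01[]-> /bit01[]->; rewrite /sgn ?addr0 ?add0r ?eqxx ?oner_eq0 //=.
by rewrite addrr_pchar2 // eqxx.
Qed.

Lemma sgn_sq (y : F) : sgn y ^+ 2 = 1.
Proof. by rewrite /sgn; case: ifP. Qed.


Lemma tr_nonzero k : (0 < k)%N -> (2 ^ k.-1 < #|F|)%N -> exists z : F, trace k z != 0.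
Proof.
move=> k0 hk; pose p : {poly F} := \sum_(i < k) 'X^(2 ^ i).
have pE z : p.[z] = trace k z by rewrite horner_sum; apply: eq_bigr => i _; rewrite hornerXn.
have pn0 : p != 0.
  apply/eqP => /(congr1 (fun r : {poly F} => r`_(2 ^ k.-1))).
  have hk1 : (k.-1 < k)%N by rewrite prednK.
  rewrite coef_sum coef0 (bigD1 (Ordinal hk1)) //= coefXn eqxx big1 ?addr0.
    by move/eqP; rewrite oner_eq0.
  move=> i /eqP hi; rewrite coefXn; case: eqP => // /eqP.
  rewrite eqn_exp2l // => /eqP hi'; by case: hi; apply: val_inj.
have szp : (size p <= (2 ^ k.-1).+1)%N.
  apply: leq_trans (size_sum _ _ _) _; apply/bigmax_leqP => i _.
  rewrite size_polyXn ltnS leq_exp2l //; rewrite -ltnS prednK //.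
case: (boolP [forall z : F, trace k z == 0]) => [/forallP hall|].
  have: (#|F| < size p)%N.
    rewrite cardE; apply: max_poly_roots pn0 _ (enum_uniq _).
    apply/allP => z _; by rewrite /root pE hall.
  by move=> h; have := leq_trans h szp; rewrite ltnS leqNgt hk.
by rewrite negb_forall => /existsP[z hz]; exists z.
Qed.

End Basics.
Section Main.
Variables (F : finFieldType) (m : nat).
Hypotheses (m_gt0 : (0 < m)%N) (cardF : #|F| = (2 ^ (2 * m))%N)
  (char2 : (2 \in [pchar F])%N).

Local Notation q := (2 ^ m)%N.
Local Notation hq := (2 ^ m.-1)%N.
Local Notation Tn := (trace (2 * m)).
Local Notation Tm := (trace m).

Definition inK (x : F) := x ^+ (2 ^ m) == x.
Definition inU (x : F) := x ^+ (2 ^ m).+1 == 1.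

Lemma q_hq : q = (2 * hq)%N.
Proof. by rewrite -expnS prednK. Qed.

Lemma hq_gt0 : (0 < hq)%N. Proof. by rewrite expn_gt0. Qed.

Lemma q_gt1 : (1 < q)%N.
Proof. by rewrite q_hq; have := hq_gt0; lia. Qed.

Lemma qq : (q * q)%N = (2 ^ (2 * m))%N.
Proof. by rewrite -expnD addnn -mul2n. Qed.

Lemma xqq (x : F) : x ^+ (q * q) = x.
Proof. by rewrite qq -cardF expf_card. Qed.

Lemma xqq' (x : F) : (x ^+ q) ^+ q = x.
Proof. by rewrite -exprM xqq. Qed.

Lemma xqq1 (x : F) : x != 0 -> x ^+ (q * q).-1 = 1.
Proof.
move=> x0; apply: (mulIf x0); rewrite mul1r -exprSr prednK ?xqq //.
by rewrite muln_gt0; have := q_gt1; lia.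
Qed.

Lemma Tn_bit (x : F) : (Tn x) ^+ 2 = Tn x.
Proof. by apply: tr_sq => //; rewrite -qq xqq. Qed.

Lemma Tm_bit (x : F) : inK x -> (Tm x) ^+ 2 = Tm x.
Proof. by move=> /eqP hx; apply: tr_sq. Qed.

Lemma Tn_split (y : F) : Tn y = Tm (y + y ^+ q).
Proof.
rewrite /trace mul2n -addnn big_split_ord /= -big_split; apply: eq_bigr => i _.
by rewrite frobD // expnD exprM.
Qed.

Lemma KM x y : inK x -> inK y -> inK (x * y).
Proof. by rewrite /inK exprMn => /eqP-> /eqP->. Qed.
Lemma KD x y : inK x -> inK y -> inK (x + y).
Proof. by rewrite /inK frobD // => /eqP-> /eqP->. Qed.
Lemma K0 : inK 0. Proof. by rewrite /inK expr0n expn_eq0. Qed.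
Lemma K1 : inK 1. Proof. by rewrite /inK expr1n. Qed.
Lemma KV x : inK x -> inK x^-1.
Proof. by rewrite /inK exprVn => /eqP->. Qed.
Lemma KX x k : inK x -> inK (x ^+ k).
Proof. by rewrite /inK -exprM mulnC exprM => /eqP->. Qed.
Lemma Kcut y : inK (y + y ^+ q).
Proof. by rewrite /inK frobD // xqq' addrC. Qed.
Lemma Knorm y : inK (y ^+ q.+1).
Proof. by rewrite /inK -exprM mulSn exprD xqq mulrC -exprS. Qed.

Lemma Tn_K t y : inK t -> Tn (t * y) = Tm (t * (y + y ^+ q)).
Proof. by move=> /eqP ht; rewrite Tn_split exprMn ht mulrDr. Qed.

Lemma Tn_K0 k : inK k -> Tn k = 0.
Proof.
by move=> hk; rewrite -[k]mulr1 Tn_K // expr1n addrr_pchar2 // mulr0 tr0.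
Qed.

Lemma Tm_sq z : inK z -> Tm (z ^+ 2) = Tm z.
Proof.
move=> hz; rewrite -[RHS](Tm_bit hz) /trace sq_sum //; apply: eq_bigr => i _.
by rewrite -!exprM mulnC.
Qed.

Lemma KU1 x : inK x -> inU x -> x = 1.
Proof.
rewrite /inK /inU exprS => /eqP-> /eqP h.
have : (x + 1) ^+ 2 = 0 by rewrite sqrD // expr2 h expr1n addrr_pchar2.
move/eqP; rewrite expf_eq0 /= addr_eq0 oppr_pchar2 // => /eqP //.
Qed.

Lemma K_q1 t : inK t -> t != 0 -> t ^+ q.-1 = 1.
Proof.
move=> /eqP ht t0; apply: (mulIf t0); rewrite mul1r -exprSr prednK //.
by rewrite expn_gt0.
Qed.

Lemma U_neq0 u : inU u -> u != 0.
Proof. by rewrite /inU; apply: contraTneq => ->; rewrite expr0n /= eq_sym oner_eq0. Qed.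

Definition uu (x : F) := x ^+ (q.-1 * hq).
Definition tt (x : F) := x / uu x.

Lemma uuU x : x != 0 -> inU (uu x).
Proof.
move=> x0; rewrite /inU /uu -exprM mulnAC exprM.
have -> : (q.-1 * q.+1 = (q * q).-1)%N by have := q_gt1; nia.
by rewrite xqq1 // expr1n.
Qed.

Lemma uu_sq x : (uu x) ^+ 2 = x ^+ (q.-1 * q).
Proof. by rewrite /uu -exprM; congr (_ ^+ _); rewrite q_hq; nia. Qed.

Lemma U_inv u : inU u -> u ^+ q * u = 1.
Proof. by rewrite /inU exprSr => /eqP. Qed.

Lemma ttK x : x != 0 -> inK (tt x).
Proof.
move=> x0; have u0 : uu x != 0 by apply: U_neq0; apply: uuU.
rewrite /inK /tt exprMn exprVn.
have hU := U_inv (uuU x0).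
have huq : (uu x ^+ q)^-1 = uu x.
  by apply: (mulIf (expf_neq0 q u0)); rewrite mulVf ?expf_neq0 // mulrC hU.
rewrite huq; apply/eqP; apply: (mulIf u0); rewrite divfK // -mulrA -expr2 uu_sq.
by rewrite -exprD -[RHS](xqq x); congr (_ ^+ _); have := q_gt1; nia.
Qed.

Lemma ttuu x : x != 0 -> tt x * uu x = x.
Proof. move=> x0; rewrite /tt divfK //; apply: U_neq0; exact: uuU. Qed.

Lemma uu_tu t u : inK t -> t != 0 -> inU u -> uu (t * u) = u.
Proof.
move=> ht t0 hu; rewrite /uu exprMn exprM K_q1 // expr1n mul1r.
have -> : (q.-1 * hq = hq.-1 * q.+1 + 1)%N.
  by rewrite q_hq; have := hq_gt0; nia.
by rewrite exprD [(hq.-1 * _)%N]mulnC exprM (eqP hu) expr1n mul1r expr1.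
Qed.

Lemma decomp (phi : F -> int) :
  \sum_(x | x != 0) phi x = \sum_(u | inU u) \sum_(t | inK t && (t != 0)) phi (t * u).
Proof.
rewrite (partition_big uu inU) /=; last by move=> x; apply: uuU.
apply: eq_bigr => u hu; have u0 := U_neq0 hu.
rewrite (reindex_onto (fun t => t * u) (fun x => x / u)) /=; last first.
  by move=> x _; rewrite divfK.
apply: eq_bigl => t; rewrite mulfK // eqxx andbT mulf_eq0 negb_or u0 andbT.
case: (eqVneq t 0) => [->|t0] /=; first by rewrite andbF.
rewrite andbT.
apply/eqP/idP => [h|ht]; last by rewrite uu_tu.
have := ttK (mulf_neq0 t0 u0); rewrite /tt h mulfK //.
Qed.


Lemma UM x y : inU x -> inU y -> inU (x * y).
Proof. by rewrite /inU exprMn => /eqP-> /eqP->; rewrite mulr1. Qed.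
Lemma UV x : inU x -> inU x^-1.
Proof. by rewrite /inU exprVn => /eqP->; rewrite invr1. Qed.

Lemma Tm_bitM x y : inK x -> inK y -> (Tm (x * y)) ^+ 2 = Tm (x * y).
Proof. by move=> hx hy; apply: Tm_bit; apply: KM. Qed.

Lemma sgn_add1 (y : F) : y ^+ 2 = y -> sgn (y + 1) = - sgn y.
Proof.
move=> hy; rewrite sgnD // ?expr1n // /sgn oner_eq0 mulrN1 //.
Qed.

Lemma exists_Tn1 : exists z : F, Tn z = 1.
Proof.
have h1 : (0 < 2 * m)%N by rewrite muln_gt0.
have h2 : (2 ^ (2 * m).-1 < #|F|)%N.
  by rewrite cardF ltn_exp2l // prednK // muln_gt0.
have [z hz] := @tr_nonzero F (2 * m) h1 h2.
exists z; by case: (bit01 (Tn_bit z)) hz => ->; rewrite ?eqxx.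
Qed.

Lemma exists_Tm1 : exists w : F, inK w /\ Tm w = 1.
Proof.
have [z hz] := exists_Tn1; exists (z + z ^+ q); split; first exact: Kcut.
by rewrite -Tn_split.
Qed.

Lemma orthK c : inK c -> \sum_(t | inK t) sgn (Tm (t * c)) = if c == 0 then #|[pred t | inK t]|%:Z else 0.
Proof.
move=> hc; case: (eqVneq c 0) => [->|c0].
  under eq_bigr do rewrite mulr0 tr0 /sgn eqxx.
  by rewrite sumr_const natz.
have [w [hw hw1]] := exists_Tm1; set d := w / c.
have hd : inK d by apply: KM => //; apply: KV.
set S := (X in X = _).
have : S = - S.
  rewrite {1}/S (reindex_inj (addIr d)) /=.
  rewrite (eq_bigl (fun t => inK t)); last first.
    move=> t; apply/idP/idP => h; last exact: KD.
    by rewrite -(addrK_pchar2 char2 d t); apply: KD.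
  rewrite /S -sumrN; apply: eq_bigr => t ht.
  rewrite mulrDl /d divfK // trD //; move: hw1; set T := trace m w => ->.
  rewrite sgn_add1 //; exact: Tm_bitM.
by move/eqP; rewrite -subr_eq0 opprK -mulr2n mulrn_eq0 /= => /eqP.
Qed.

Lemma orthF (c : F) : c != 0 -> \sum_x sgn (Tn (c * x)) = 0.
Proof.
move=> c0; have [w hw1] := exists_Tn1; set d := w / c.
set S := (X in X = _).
have : S = - S.
  rewrite {1}/S (reindex_inj (addIr d)) /=.
  rewrite /S -sumrN; apply: eq_bigr => t _.
  rewrite mulrDr /d mulrCA divff // mulr1 trD //; move: hw1; set T := trace _ w => ->.
  by rewrite sgn_add1 // Tn_bit.
by move/eqP; rewrite -subr_eq0 opprK -mulr2n mulrn_eq0 /= => /eqP.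
Qed.

Lemma sum_Kstar (g : F -> int) :
  \sum_(t | inK t && (t != 0)) g t = \sum_(t | inK t) g t - g 0.
Proof. by rewrite [X in _ = X - _](bigD1 0) ?K0 //= addrAC subrr add0r. Qed.


Lemma sum1 (P : pred F) : \sum_(x | P x) (1 : int) = #|P|%:Z.
Proof. by rewrite sumr_const natz. Qed.

Section Xi.
Variable xi : F.
Hypothesis xi_prim : (q.+1).-primitive_root xi.

Lemma cardU : #|[pred u | inU u]| = q.+1.
Proof.
have inj : injective (fun i : 'I_q.+1 => xi ^+ i).
  move=> i j /eqP; rewrite (eq_prim_root_expr xi_prim) !modn_small // => /eqP.
  exact: val_inj.
rewrite -[RHS]card_ord -(card_image inj); apply: eq_card => u; rewrite inE.
apply/idP/imageP => [hu|[i _ ->]].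
  by have [i ->] := prim_rootP xi_prim (eqP hu); exists i.
by rewrite /inU -exprM mulnC exprM (prim_expr_order xi_prim) expr1n.
Qed.

Lemma cardK : #|[pred t | inK t]| = q.
Proof.
have h := decomp (fun _ => 1).
rewrite (sum1 (fun x => x != 0)) (eq_bigr (fun _ => #|[pred t | inK t && (t != 0)]|%:Z)) in h;
  last by move=> u _; rewrite (sum1 (fun t => inK t && (t != 0))).
rewrite sumr_const in h.
have h' : (#|(fun x : F => x != 0%R)| = #|[pred t | inK t & t != 0%R]| * #|[pred u | inU u]|)%N.
  by apply/eqP; rewrite -eqz_nat h -mulr_natr natz -PoszM.
rewrite cardU in h'; clear h; move: h' => h.
have hF : #|[pred x : F | x != 0]| = (q * q).-1.
  rewrite qq -cardF -(cardC (pred1 (0:F))) card1 add1n /=; apply: eq_card => x.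
  by rewrite !inE.
have hK : #|[pred t | inK t]| = #|[pred t | inK t && (t != 0)]|.+1.
  by rewrite (cardD1 0) inE K0 /=; congr (_.+1); apply: eq_card => t; rewrite !inE andbC.
rewrite hK; move: h; rewrite hF => h.
have := q_gt1; nia.
Qed.



Lemma sumU_const (c : int) : \sum_(u | inU u) c = c * (q.+1)%:Z.
Proof.
rewrite sumr_const -mulr_natr natz; congr (_ * _%:Z).
by rewrite -[RHS]cardU; apply: eq_card.
Qed.

Lemma s0 : sgn (0 : F) = 1. Proof. by rewrite /sgn eqxx. Qed.

Lemma G_val t : inK t -> t != 0 -> \sum_y sgn (Tm (t * y ^+ q.+1)) = - (q%:Z).
Proof.
move=> ht t0; rewrite (bigD1 0) //= expr0n /= mulr0 tr0 // s0 decomp.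
set r := t ^+ hq.
have hr : inK r by apply: KX.
have r0 : r != 0 by rewrite expf_neq0.
have hr2 : r ^+ 2 = t by rewrite /r -exprM mulnC -q_hq; apply/eqP.
rewrite (eq_bigr (fun _ => -1)); last first.
  move=> u hu; rewrite (eq_bigr (fun s => sgn (Tm (s * r)))); last first.
    move=> s /andP[hs s0']; rewrite exprMn (eqP hu) mulr1 exprS (eqP hs) -expr2.
    rewrite -hr2 -exprMn Tm_sq; first by rewrite mulrC.
    by apply: KM.
  by rewrite sum_Kstar orthK // (negbTE r0) mul0r tr0 // s0 sub0r.
by rewrite sumU_const; lia.
Qed.


Lemma transl c t : inK c -> inK t -> t != 0 ->
  \sum_x sgn (Tn (c * x)) * sgn (Tm (t * x ^+ q.+1)) =
  sgn (Tm (c * (c / t))) * \sum_y sgn (Tm (t * y ^+ q.+1)).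
Proof.
move=> hc ht t0; set e := c / t.
have he : inK e by apply: KM => //; apply: KV.
rewrite (reindex_inj (addIr e)) /= mulr_sumr; apply: eq_bigr => y _.
rewrite -!sgnD ?Tn_bit ?Tm_bitM ?Knorm //; congr sgn.
have E : t * (y + e) ^+ q.+1 = t * y ^+ q.+1 + c * (y + y ^+ q) + c * e.
  rewrite !exprS frobD // (eqP he) /e; field; exact: t0.
rewrite E !trD // mulrDr trD // (Tn_K0 (KM hc he)) addr0 Tn_K //.
set a := Tm (c * _); set b := Tm (t * _); set d := Tm (c * e).
by rewrite (addrC b a) !addrA (addrr_pchar2 char2) add0r addrC.
Qed.

Lemma kl_id c : inK c -> c != 0 ->
  \sum_(v | inU v) sgn (Tn (c * v)) =
  - \sum_(t | inK t && (t != 0)) sgn (Tm (c * t + t^-1)).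
Proof.
move=> hc c0.
set SU := \sum_(v | inU v) sgn (Tn (c * v)).
have A : q%:Z * SU = \sum_(x | x != 0) sgn (Tn (c * x)) *
           \sum_(t | inK t) sgn (Tm (t * (x ^+ q.+1 + 1))).
  rewrite (eq_bigr (fun x => if inU x then sgn (Tn (c * x)) * q%:Z else 0)); last first.
    move=> x _; rewrite orthK; last by apply: KD; [apply: Knorm|apply: K1].
    rewrite addr_eq0 oppr_pchar2 // -/(inU x) cardK.
    by case: (inU x); rewrite ?mulr0.
  rewrite -big_mkcondr /= mulr_sumr.
  rewrite (eq_bigl (fun x => inU x)); last first.
    by move=> x; apply/andP/idP => [[]//|h]; split => //; apply: U_neq0.
  by apply: eq_bigr => x _; rewrite mulrC.
have B : \sum_(x | x != 0) sgn (Tn (c * x)) *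
           \sum_(t | inK t) sgn (Tm (t * (x ^+ q.+1 + 1))) =
         \sum_(t | inK t) sgn (Tm t) *
           \sum_(x | x != 0) sgn (Tn (c * x)) * sgn (Tm (t * x ^+ q.+1)).
  under eq_bigr do rewrite mulr_sumr.
  rewrite exchange_big /=; apply: eq_bigr => t ht; rewrite mulr_sumr.
  apply: eq_bigr => x _; rewrite mulrDr mulr1 trD // sgnD ?Tm_bitM ?Knorm ?Tm_bit //.
  ring.
have Sx (g : F -> int) : \sum_(x | x != 0) g x = \sum_x g x - g 0.
  by rewrite [X in _ = X - _](bigD1 0) //= addrAC subrr add0r.
have C : \sum_(t | inK t) sgn (Tm t) *
           \sum_(x | x != 0) sgn (Tn (c * x)) * sgn (Tm (t * x ^+ q.+1)) =
         -1 - q%:Z * \sum_(t | inK t && (t != 0)) sgn (Tm (t + c * (c / t))) + 1.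
  rewrite (bigD1 0) ?K0 //= tr0 // s0 mul1r.
  rewrite (eq_bigr (fun x => sgn (Tn (c * x)))); last by move=> x _; rewrite mul0r tr0 // s0 mulr1.
  rewrite Sx orthF // mulr0 tr0 // s0 sub0r; rewrite -addrA; congr (_ + _).
  rewrite (eq_bigr (fun t => - q%:Z * sgn (Tm (t + c * (c / t))) - sgn (Tm t))); last first.
    move=> t /andP[ht t0]; rewrite Sx transl // G_val // mulr0 tr0 // expr0n /= mulr0 tr0 // s0 mulr1.
    rewrite trD // sgnD ?Tm_bit //; last by apply: KM => //; apply: KM => //; apply: KV.
    ring.
  rewrite sumrB -mulr_sumr mulNr; congr (_ + _).
  rewrite sum_Kstar (eq_bigr (fun t => sgn (Tm (t * 1)))); last by move=> t _; rewrite mulr1.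
  by rewrite orthK ?K1 // oner_eq0 tr0 // s0 sub0r opprK.
have D : q%:Z * SU = q%:Z * - \sum_(t | inK t && (t != 0)) sgn (Tm (t + c * (c / t))).
  by rewrite A B C addrAC subrr add0r mulrN.
have q0 : q%:Z != 0 by have := q_gt1; lia.
rewrite (mulfI q0 D); congr (- _).
rewrite (reindex_onto (fun r => r^-1 ^+ 2) (fun t => t^-1 ^+ hq)) /=; last first.
  move=> t /andP[ht t0]; rewrite -exprVn invrK -exprM mulnC -q_hq; exact/eqP.
apply: eq_big => r.
  case: (eqVneq r 0) => [->|r0]; first by rewrite invr0 expr0n /= eqxx !andbF.
  rewrite (expf_neq0 _ (invr_neq0 r0)) !andbT /=.
  apply/andP/idP => [[h1 /eqP h2]|hr].
    by rewrite -h2; apply: KX; apply: KV.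
  split; first by apply: KX; apply: KV.
  by rewrite -exprVn invrK -exprM -q_hq.
move=> /andP[/andP[h1 h3] /eqP h2].
have hr : inK r by rewrite -h2; apply: KX; apply: KV.
have r0 : r != 0 by apply: contraNneq h3 => ->; rewrite invr0 expr0n.
have E : r^-1 ^+ 2 + c * (c / r^-1 ^+ 2) = (c * r + r^-1) ^+ 2.
  by rewrite sqrD //; field; rewrite r0 oner_eq0.
by rewrite E Tm_sq //; apply: KD; [apply: KM|apply: KV].
Qed.


Lemma kl_formal c : inK c -> kloosterman m c =
  (if m == 1%N then -1 else 1) + \sum_(t | inK t && (t != 0)) sgn (Tm (c * t + t^-1)).
Proof.
move=> hc; rewrite /kloosterman (bigD1 0) /=; last exact: K0.
congr (_ + _).
  rewrite mulr0 add0r expr0n; case: (eqVneq m 1%N) => [->|m1] /=.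
    by rewrite /trace big_ord1 expr1n /sgn oner_eq0.
  have -> : (2 ^ m - 2 == 0)%N = false.
    apply/negbTE; rewrite subn_eq0 -ltnNge.
    by rewrite -[X in (X < _)%N](expn1 2) ltn_exp2l //; lia.
  by rewrite tr0 // s0.
apply: eq_bigr => x /andP[hx x0]; congr (sgn (Tm (_ + _))).
apply: (mulIf x0); rewrite mulVf // -exprSr -(K_q1 hx x0); congr (_ ^+ _).
have := q_gt1; lia.
Qed.


Lemma Uexp_mul u z : inU u -> u ^ ((q.+1)%:Z * z) = 1.
Proof. by move=> hu; rewrite -exprz_exp -exprnP (eqP hu) exp1rz. Qed.

Lemma Uexp_red u z k : inU u -> u ^ (z + (q.+1)%:Z * k) = u ^ z.
Proof.
by move=> hu; rewrite exprzDr ?unitfE ?U_neq0 // Uexp_mul // mulr1.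
Qed.

Lemma UexpU u z : inU u -> inU (u ^ z).
Proof. by move=> hu; rewrite /inU exprnP exprzAC -exprnP (eqP hu) exp1rz. Qed.

Lemma reindexU (G : F -> int) (E R k : int) :
  E * R = 1 + (q.+1)%:Z * k ->
  \sum_(u | inU u) G (u ^ E) = \sum_(v | inU v) G v.
Proof.
move=> hER.
rewrite [RHS](reindex_onto (fun u => u ^ E) (fun v => v ^ R)) /=; last first.
  by move=> v hv; rewrite exprz_exp mulrC hER Uexp_red // expr1z.
apply: eq_bigl => u; apply/idP/andP => [hu|[h1 /eqP h2]]; last first.
  by rewrite -h2; apply: UexpU.
split; first exact: UexpU.
by rewrite exprz_exp hER Uexp_red // expr1z.
Qed.

Lemma geom (y : F) (d : nat) : y ^+ d = 1 -> odd d ->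
  \sum_(1 <= i < d) y ^+ i = if y == 1 then 0 else 1.
Proof.
move=> hy od; case: (eqVneq y 1) => [->|y1].
  under eq_bigr do rewrite expr1n.
  rewrite sumr_const_nat; case: d hy od => // d _ /= ed.
  rewrite subSS subn0.
  have -> : d = (d./2 * 2)%N by rewrite -[LHS]odd_double_half (negbTE ed) add0n muln2.
  by rewrite natrM (pcharf0 char2) mulr0.
have d0 : (0 < d)%N by case: d hy od.
have h : \sum_(i < d) y ^+ i = 0.
  have := subrX1 y d; rewrite hy subrr => /esym /eqP; rewrite mulf_eq0 subr_eq0.
  by rewrite (negbTE y1) /= => /eqP.
move: h; rewrite -(big_mkord xpredT (fun i => y ^+ i)) /= (big_ltn d0) expr0 => /eqP.
rewrite addr_eq0 oppr_pchar2 // => /eqP ->; by [].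
Qed.

Section Walsh.
Variable f : F -> F.
Hypotheses (f0 : f 0 = 0) (fbit : forall x, f x ^+ 2 = f x)
  (finv : forall t x, inK t -> t != 0 -> x != 0 -> f (t * x) = f x).

Let S := \sum_(u | inU u) sgn (f u).

Lemma walsh_gen lam : walsh (2 * m) f lam =
  1 + \sum_(u | inU u) sgn (f u) *
        ((if lam * u + (lam * u) ^+ q == 0 then q%:Z else 0) - 1).
Proof.
have s0 : sgn (0 : F) = 1 by rewrite /sgn eqxx.
rewrite /walsh (bigD1 0) //= f0 mulr0 tr0 // add0r s0.
congr (1 + _); rewrite decomp; apply: eq_bigr => u hu.
rewrite (eq_bigr (fun t => sgn (f u) * sgn (Tm (t * (lam * u + (lam * u) ^+ q)))));
  last first.
  move=> t /andP[ht t0]; rewrite (finv ht t0 (U_neq0 hu)) sgnD ?fbit ?Tn_bit //.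
  by rewrite mulrCA Tn_K.
by rewrite -mulr_sumr sum_Kstar orthK ?Kcut // mul0r tr0 // cardK s0.
Qed.

Lemma walsh_0 : walsh (2 * m) f 0 = 1 + (q%:Z - 1) * S.
Proof.
rewrite walsh_gen /S mulr_sumr; congr (1 + _); apply: eq_bigr => u _.
by rewrite mul0r expr0n expn_eq0 /= addr0 eqxx mulrC.
Qed.

Lemma cK_U lam u : lam != 0 -> inU u ->
  (lam * u + (lam * u) ^+ q == 0) = (u == (uu lam)^-1).
Proof.
move=> l0 hu; have u0 := U_neq0 hu; have uu0 : uu lam != 0 by apply: U_neq0; apply: uuU.
rewrite addr_eq0 oppr_pchar2 // eq_sym -/(inK _).
apply/idP/eqP => [h|->]; last exact: ttK.
have h1 : inK ((lam * u) / tt lam) by apply: KM => //; apply: KV; apply: ttK.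
have e : (lam * u) / tt lam = u * uu lam.
  by rewrite /tt; field; rewrite uu0 l0.
rewrite e in h1; have := KU1 h1 (UM hu (uuU l0)) => h2.
by apply: (mulIf uu0); rewrite h2 mulVf.
Qed.

Lemma walsh_N lam : lam != 0 ->
  walsh (2 * m) f lam = 1 - S + q%:Z * sgn (f (uu lam)^-1).
Proof.
move=> l0; rewrite walsh_gen -addrA; congr (1 + _).
rewrite (eq_bigr (fun u => sgn (f u) * (if u == (uu lam)^-1 then q%:Z else 0) - sgn (f u)));
  last by move=> u hu; rewrite cK_U // mulrBr mulr1.
rewrite sumrB addrC /S; congr (_ + _).
have hu0 : inU (uu lam)^-1 by apply: UV; apply: uuU.
rewrite (bigD1 _ hu0) /= eqxx big1; first by rewrite addr0 mulrC.
by move=> u /andP[_ /negbTE->]; rewrite mulr0.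
Qed.

Lemma qZ2 : (q%:Z) ^+ 2 = (2 ^ (2 * m))%N%:Z.
Proof. by rewrite -qq PoszM expr2. Qed.

Lemma bent_of_S1 : S = 1 -> bent (2 * m) f.
Proof.
move=> hS lam; case: (eqVneq lam 0) => [->|l0].
  by rewrite walsh_0 hS mulr1 addrC subrK qZ2.
rewrite walsh_N // hS subrr add0r exprMn sgn_sq mulr1 qZ2 //.
Qed.

Lemma S_of_bent : bent (2 * m) f -> S = 1 \/ (q%:Z - 1) * S = - (q%:Z + 1).
Proof.
move=> hb; have := hb 0; rewrite walsh_0 -qZ2 => /eqP.
rewrite -subr_eq0 subr_sqr mulf_eq0 => /orP[] /eqP h.
  left; have hq1 : (q%:Z - 1) != 0.
    by rewrite subr_eq0; have := q_gt1; lia.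
  apply/eqP; rewrite -subr_eq0; apply/eqP; apply: (mulfI hq1).
  by rewrite mulr0 -h; ring.
by right; apply/eqP; rewrite -subr_eq0; apply/eqP; rewrite -h; ring.
Qed.

End Walsh.


Section Fspec.
Variables (s : int) (a abar : F) (k : nat).
Hypotheses (h3 : (3 %| q.+1)%N) (hs : coprimez s (q.+1)%:Z) (a_neq0 : a != 0)
  (habar : abar ^+ q = abar) (ha : a = abar * xi ^+ k).

Local Notation d := (q.+1 %/ 3)%N.

Definition fz (x : F) := if x == 0 then 0 else
  \sum_(1 <= i < d) Tn (a * x ^ ((3 * i%:Z + s) * (q%:Z - 1))).

Definition Gf (v : F) := if v ^+ 3 == 1 then 0 else Tn (a * v).

Lemma d3 : (3 * d)%N = q.+1.
Proof. by rewrite mulnC divnK. Qed.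

Lemma d3' : (d * 3)%N = q.+1.
Proof. by rewrite divnK. Qed.

Lemma d_odd : odd d.
Proof.
have := d3; move/(congr1 odd); rewrite oddM /= => ->.
by rewrite q_hq oddM.
Qed.

Lemma d_gt0 : (0 < d)%N.
Proof. by have := d3; case: (d). Qed.

Lemma hq1 : q%:Z - 1 = (q.-1)%:Z.
Proof. by have := q_gt1; lia. Qed.

Lemma fz0 : fz 0 = 0. Proof. by rewrite /fz eqxx. Qed.

Lemma fz_bit x : fz x ^+ 2 = fz x.
Proof.
rewrite /fz; case: eqP => _; first by rewrite expr0n.
by rewrite -tr_sum // Tn_bit.
Qed.

Lemma fz_inv t x : inK t -> t != 0 -> x != 0 -> fz (t * x) = fz x.
Proof.
move=> ht t0 x0; rewrite /fz mulf_eq0 (negbTE t0) (negbTE x0) /=.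
apply: eq_bigr => i _; congr (Tn (a * _)).
have tE : t ^ ((3 * i%:Z + s) * (q%:Z - 1)) = 1.
  by rewrite mulrC -exprz_exp hq1 -exprnP K_q1 // exp1rz.
by rewrite exprzMl ?unitfE // tE mul1r.
Qed.

Lemma bez : {a0 : int & {b0 : int | a0 * s + b0 * (q.+1)%:Z = 1}}.
Proof.
have [a0 [b0 h]] := Bezoutz s (q.+1)%:Z; exists a0, b0; rewrite h.
by apply/eqP; exact: hs.
Qed.

Lemma cube_s w : inU w -> ((w ^ s) ^+ 3 == 1) = (w ^+ 3 == 1).
Proof.
move=> hw; apply/idP/idP => h; last first.
  by rewrite exprnP exprzAC -exprnP (eqP h) exp1rz.
have [a0 [b0 hab]] := bez.
have e : w = (w ^ s) ^ a0.
  rewrite exprz_exp -[in LHS](expr1z w) -hab mulrC [b0 * _]mulrC.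
  by rewrite (mulrC s) Uexp_red.
by rewrite e exprnP exprzAC -exprnP (eqP h) exp1rz.
Qed.

Lemma fz_U u : inU u -> fz u = Gf (u ^ ((q.-1)%:Z * s)).
Proof.
move=> hu; have u0 := U_neq0 hu; rewrite /fz (negbTE u0).
set w := u ^+ q.-1.
have hw : inU w by rewrite /inU -exprM mulnC exprM (eqP hu) expr1n.
have w0 : w != 0 := U_neq0 hw.
have step1 i : u ^ ((3 * i%:Z + s) * (q%:Z - 1)) = (w ^+ 3) ^+ i * w ^ s.
  rewrite mulrC -exprz_exp hq1 -exprnP -/w exprzDr ?unitfE //.
  rewrite -exprM exprnP; congr (w ^ _ * _); exact: erefl.
under eq_bigr do rewrite step1.
have -> : \sum_(1 <= i < d) Tn (a * ((w ^+ 3) ^+ i * w ^ s)) =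
          Tn (a * w ^ s * \sum_(1 <= i < d) (w ^+ 3) ^+ i).
  rewrite mulr_sumr tr_sum //; apply: eq_bigr => i _; congr Tn.
  set A := (w ^+ 3) ^+ i; set B := w ^ s.
  by rewrite -mulrA [A * B]mulrC.
rewrite geom ?d_odd //; last by rewrite -exprM d3 (eqP hw).
have -> : u ^ ((q.-1)%:Z * s) = w ^ s by rewrite -exprz_exp.
rewrite /Gf cube_s //; case: (w ^+ 3 == 1); first by rewrite mulr0 tr0.
by rewrite mulr1.
Qed.


Lemma S_reindex : \sum_(u | inU u) sgn (fz u) = \sum_(v | inU v) sgn (Gf v).
Proof.
rewrite (eq_bigr (fun u => sgn (Gf (u ^ ((q.-1)%:Z * s))))); last first.
  by move=> u hu; rewrite fz_U.
have [a0 [b0 hab]] := bez.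
set H := hq%:Z.
have eq1 : (q.-1)%:Z = 2 * H - 1 by rewrite /H q_hq; have := hq_gt0; lia.
have eq2 : (q.+1)%:Z = 2 * H + 1 by rewrite /H q_hq; lia.
apply: (@reindexU _ _ (-(H + 1) * a0) (-(H + b0) + H * b0 * (2 * H + 1))).
rewrite eq1 eq2; rewrite eq2 in hab.
have -> : (2 * H - 1) * s * (-(H + 1) * a0) = -((2 * H - 1) * (H + 1)) * (a0 * s) by ring.
have -> : a0 * s = 1 - b0 * (2 * H + 1).
  by apply: (addIr (b0 * (2 * H + 1))); rewrite hab; ring.
ring.
Qed.

Lemma xi_inj (i j : nat) : (i < q.+1)%N -> (j < q.+1)%N -> (xi ^+ i == xi ^+ j) = (i == j).
Proof. by move=> hi hj; rewrite (eq_prim_root_expr xi_prim) !modn_small. Qed.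

Lemma om3 : (xi ^+ d) ^+ 3 = 1.
Proof. by rewrite -exprM d3' prim_expr_order. Qed.


Lemma d_lt : (d < q.+1)%N.
Proof. by rewrite -d3'; have := d_gt0; lia. Qed.

Lemma d2_lt : (2 * d < q.+1)%N.
Proof. by rewrite -d3'; have := d_gt0; lia. Qed.

Lemma om_neq1 : xi ^+ d != 1.
Proof. by rewrite -(expr0 xi) xi_inj ?d_lt // -lt0n d_gt0. Qed.

Lemma om_sum : 1 + xi ^+ d + (xi ^+ d) ^+ 2 = 0.
Proof.
have h : (xi ^+ d - 1) * (1 + xi ^+ d + (xi ^+ d) ^+ 2) = 0.
  have -> : (xi ^+ d - 1) * (1 + xi ^+ d + (xi ^+ d) ^+ 2) = (xi ^+ d) ^+ 3 - 1 by ring.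
  by rewrite om3 subrr.
by move/eqP: h; rewrite mulf_eq0 subr_eq0 (negbTE om_neq1) /= => /eqP.
Qed.

Lemma om2 : (xi ^+ d) ^+ 2 = xi ^+ (2 * d).
Proof. by rewrite -exprM mulnC. Qed.

Lemma cube_list v : (v ^+ 3 == 1) = (v \in [:: 1; xi ^+ d; xi ^+ (2 * d)]).
Proof.
rewrite !inE -om2; apply/idP/idP => [/eqP h|].
  have e : (v - 1) * (v - xi ^+ d) * (v - (xi ^+ d) ^+ 2) =
           v ^+ 3 - (xi ^+ d) ^+ 3 - (1 + xi ^+ d + (xi ^+ d) ^+ 2) * (v ^+ 2 - xi ^+ d * v).
    by ring.
  move: e; rewrite h om3 om_sum mul0r subr0 subrr => /eqP.
  by rewrite !mulf_eq0 !subr_eq0 orbA.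
by case/or3P => /eqP->; rewrite ?expr1n // ?om3 // exprAC om3 expr1n.
Qed.

Lemma cube_uniq : uniq [:: (1 : F); xi ^+ d; xi ^+ (2 * d)].
Proof.
rewrite /= !inE -(expr0 xi) !xi_inj ?d_lt ?d2_lt //.
by have := d_gt0; case: d => // n _; rewrite andbT !eqn_leq /=; lia.
Qed.

Lemma sum_cube (phi : F -> int) :
  \sum_(v | inU v && (v ^+ 3 == 1)) phi v = phi 1 + phi (xi ^+ d) + phi (xi ^+ (2 * d)).
Proof.
rewrite (eq_bigl (fun v => v \in [:: 1; xi ^+ d; xi ^+ (2 * d)])); last first.
  move=> v; rewrite -cube_list; apply/andP/idP => [[]//|h]; split => //.
  by rewrite /inU -d3' mulnC exprM (eqP h) expr1n.
rewrite -big_uniq ?cube_uniq // !big_cons big_nil /=.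
by rewrite addr0 addrA.
Qed.


Lemma S_formula : \sum_(u | inU u) sgn (fz u) =
  3 + \sum_(v | inU v) sgn (Tn (a * v)) -
  (sgn (Tn (a * 1)) + sgn (Tn (a * xi ^+ d)) + sgn (Tn (a * xi ^+ (2 * d)))).
Proof.
rewrite S_reindex (bigID (fun v => v ^+ 3 == 1)) /=.
rewrite (eq_bigr (fun _ => 1)); last by move=> v /andP[_ h]; rewrite /Gf h s0.
rewrite sum_cube.
rewrite (eq_bigr (fun v => sgn (Tn (a * v)))); last first.
  by move=> v /andP[_ /negbTE h]; rewrite /Gf h.
rewrite [in RHS](bigID (fun v => v ^+ 3 == 1)) /= sum_cube.
set A := \sum_(i | _ && ~~ _) _; set B := (_ + _ + sgn _).
have -> : (1 + 1 + 1 : int) = 3 by [].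
by rewrite [B + A]addrC addrA addrK.
Qed.

Lemma xi_neq0 : xi != 0.
Proof. by apply: U_neq0; rewrite /inU prim_expr_order. Qed.

Lemma SU_a : \sum_(v | inU v) sgn (Tn (a * v)) =
  (if m == 1%N then -1 else 1) - kloosterman m abar.
Proof.
have hK : inK abar by apply/eqP.
have ab0 : abar != 0 by apply: contraNneq a_neq0 => e; rewrite ha e mul0r.
have xk : xi ^+ k \is a GRing.unit by rewrite unitfE expf_neq0 // xi_neq0.
have -> : \sum_(v | inU v) sgn (Tn (a * v)) = \sum_(v | inU v) sgn (Tn (abar * v)).
  rewrite [RHS](reindex_inj (mulrI xk)) /=; apply: eq_big => v.
    by rewrite /inU exprMn -exprM mulnC exprM (prim_expr_order xi_prim) expr1n mul1r.
  by rewrite ha mulrA.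
rewrite kl_id // kl_formal //.
by rewrite opprD addrA subrr add0r.
Qed.


Lemma sum3 : \sum_(j < 3) sgn (Tn (a * xi ^+ (j * d))) =
  sgn (Tn a) + sgn (Tn (a * xi ^+ d)) + sgn (Tn (a * xi ^+ (2 * d))).
Proof. by rewrite !big_ord_recl big_ord0 /= mul0n expr0 mulr1 mul1n addr0 addrA. Qed.

Lemma main_fz :
  (bent (2 * m) fz <->
     kloosterman m abar = 3 - \sum_(j < 3) sgn (Tn (a * xi ^+ (j * d)))) /\
  (bent (2 * m) fz ->
     if [&& Tn a == 0, Tn (a * xi ^+ d) == 0 & Tn (a * xi ^+ (2 * d)) == 0]
     then kloosterman m abar = 0 else kloosterman m abar = 4).
Proof.
have hS := S_formula; rewrite SU_a mulr1 in hS.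
rewrite sum3.
set S := \sum_(u | inU u) sgn (fz u) in hS.
set K := kloosterman m abar in hS *.
set t0 := Tn a in hS *; set t1 := Tn (a * xi ^+ d) in hS *; set t2 := Tn (a * xi ^+ (2 * d)) in hS *.
have SB := @S_of_bent fz fz0 fz_bit fz_inv.
have BS := @bent_of_S1 fz fz0 fz_bit fz_inv.
rewrite -/S in SB BS.
case: (eqVneq m 1%N) => [m1|m1].
  have hq2 : q = 2%N by rewrite m1.
  have e1 : (m == 1%N) = true by apply/eqP.
  have hSU : \sum_(v | inU v) sgn (Tn (a * v)) = sgn t0 + sgn t1 + sgn t2.
    rewrite (eq_bigl (fun v => inU v && (v ^+ 3 == 1))); last first.
      by move=> v; rewrite /inU hq2 andbb.
    by rewrite sum_cube mulr1.
  have K3 : K = -1 - (sgn t0 + sgn t1 + sgn t2).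
    by move: (SU_a); rewrite hSU e1 -/K => ->; rewrite opprB addrC subrK.
  have S3 : S = 3.
    by rewrite hS e1 K3; lia.
  have nb : ~ bent (2 * m) fz.
    move=> /SB [|]; rewrite S3 // => h.
    by move: h; rewrite hq2; lia.
  split; last by move=> /nb.
  split => [/nb //|]; rewrite K3; lia.
have m2 : (2 <= m)%N by lia.
have q4 : (4 <= q)%N by rewrite -[4%N]/(2 ^ 2)%N leq_exp2l.
rewrite (negbTE m1) in hS.
have bentK : bent (2 * m) fz <-> K = 3 - (sgn t0 + sgn t1 + sgn t2).
  split => [hb|hK].
    case: (SB hb) => h; first by move: h; rewrite hS => h; lia.
    exfalso; have : (0 <= S) \/ (S = -1) \/ (S <= -2) by lia.
    by case=> [|[]] hx; nia.
  by apply: BS; rewrite hS hK; lia.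
split => // /bentK ->.
have bt x : Tn x = 0 \/ Tn x = 1 := bit01 (Tn_bit x).
have hsum : t0 + t1 + t2 = 0.
  rewrite /t0 /t1 /t2 -!trD // -om2 -[a in a + _ + _]mulr1 -!mulrDr.
  by rewrite om_sum mulr0 tr0.
have two : (1 : F) + 1 = 0 := addrr_pchar2 char2 1.
have o1 : (1 : F) != 0 := oner_neq0 _.
case: (bt a) (bt (a * xi ^+ d)) (bt (a * xi ^+ (2 * d))) hsum;
  rewrite -/t0 -/t1 -/t2 => -> [] -> [] ->;
  rewrite ?addr0 ?add0r ?two ?add0r ?addr0 ?eqxx /= ?(negbTE o1) => // h;
  try (by move: o1; rewrite h eqxx);
  by rewrite /sgn ?eqxx ?(negbTE o1).
Qed.

End Fspec.

End Xi.

End Main.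

Theorem corollary5 (F : finFieldType) (m : nat) (s : int) (xi a abar : F) (k : nat) :
  (0 < m)%N ->
  (3 %| 2 ^ m + 1)%N ->
  #|F| = (2 ^ (2 * m))%N ->
  (2 \in [pchar F])%N ->
  coprimez s (2 ^ m + 1)%:Z ->
  (2 ^ m + 1).-primitive_root xi ->
  a != 0 ->
  abar ^+ (2 ^ m) = abar ->
  (k <= 2 ^ m)%N ->
  a = abar * xi ^+ k ->
  let f := fun x : F =>
    if x == 0 then 0
    else \sum_(1 <= i < (2 ^ m + 1) %/ 3)
           trace (2 * m) (a * x ^ ((3 * i%:Z + s) * ((2 ^ m)%:Z - 1))) in
  (bent (2 * m) f <->
     kloosterman m abar =
       3 - \sum_(j < 3) sgn (trace (2 * m) (a * xi ^+ (j * ((2 ^ m + 1) %/ 3))))) /\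
  (bent (2 * m) f ->
     if [&& trace (2 * m) a == 0,
            trace (2 * m) (a * xi ^+ ((2 ^ m + 1) %/ 3)) == 0 &
            trace (2 * m) (a * xi ^+ (2 * ((2 ^ m + 1) %/ 3))) == 0]
     then kloosterman m abar = 0
     else kloosterman m abar = 4).
Proof.
move=> m0 h3 cardF char2 hs prim a0 habar _ ha.
rewrite addn1 in h3 hs prim; rewrite !addn1.
exact: (@main_fz F m m0 cardF char2 xi prim s a abar k h3 hs a0 habar ha).
Qed.
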